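(* Let $\delta\ge 2$ and $s\in\{1,\dots,n\}$ with $d_s-\delta+1\ge 1$, and let $\tilde d=\sum_{i\ne s}(d_i-1)+d_s-\delta$. If $d\ge\tilde d$ then $\mathcal D^{(\delta,s)}_{\mathcal X}(d)=\mathcal D^{(\delta,s)}_{\mathcal X}(\tilde d)$, and $$\dim_{\mathbb F_q}\mathcal D^{(\delta,s)}_{\mathcal X}(\tilde d)=(d_s-\delta+1)\prod_{i\ne s}d_i .$$ Moreover, if $\tilde d\ge 1$, then $\dim_{\mathbb F_q}\mathcal D^{(\delta,s)}_{\mathcal X}(\tilde d-1)=\dim_{\mathbb F_q}\mathcal D^{(\delta,s)}_{\mathcal X}(\tilde d)-1$.
   Context: Let $\mathbb F_q$ be a finite field, $K_1,\dots,K_n\subseteq\mathbb F_q$ nonempty, $d_i=|K_i|$, and $\mathcal X=K_1\times\cdots\times K_n=\{\boldsymbol\alpha_1,\dots,\boldsymbol\alpha_m\}$ (a fixed enumeration), $m=\prod_{i=1}^n d_i$. Let $\Psi:\mathbb F_q[X_1,\dots,X_n]\to\mathbb F_q^m$, $f\mapsto(f(\boldsymbol\alpha_1),\dots,f(\boldsymbol\alpha_m))$. For $d\ge 0$, $\mathbb F_q[X_1,\dots,X_n]_{\le d}$ is the space of polynomials of degree at most $d$ together with $0$. For integers $\delta\ge 2$ and $s\in\{1,\dots,n\}$, $\mathcal P^{(\delta,s)}_d$ is the set of $f\in\mathbb F_q[X_1,\dots,X_n]_{\le d}$ with $\deg_{X_s}f<d_s-\delta+1$, together with $0$; the $(\delta,s)$-quasi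 affine cartesian code is $\mathcal D^{(\delta,s)}_{\mathcal X}(d)=\Psi(\mathcal P^{(\delta,s)}_d)\subseteq\mathbb F_q^m$. *)

(* Defs.v *)
From HB Require Import structures.
From mathcomp Require Import all_boot all_order all_algebra all_field.
From mathcomp Require Import mpoly.
From Stdlib Require Import ClassicalEpsilon.
Set Implicit Arguments. Unset Strict Implicit. Unset Printing Implicit Defensive.
Import GRing.Theory.
Local Open Scope ring_scope.

(* degree of the multivariate polynomial p in the variable X_s
   (0 for the zero polynomial) *)
Definition degX (F : finFieldType) (n : nat) (s : 'I_n) (p : {mpoly F[n]}) : nat :=
  (\max_(mo <- msupp p) mo s)%N.

Definition in_grid (F : finFieldType) (n : nat) (K : 'I_n -> {set F})
  (x : 'I_n -> F) : Prop := forall i, x i \in K i.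

Definition Psi (F : finFieldType) (n m : nat) (alpha : 'I_m -> ('I_n -> F))
  (f : {mpoly F[n]}) : 'rV[F]_m := \row_(j < m) f.@[alpha j].

(* P^{(delta,s)}_d : polynomials of total degree <= d (or 0) with
   deg_{X_s} f < d_s - delta + 1  (msize p = total degree + 1, msize 0 = 0) *)
Definition Pds (F : finFieldType) (n : nat) (K : 'I_n -> {set F})
  (delta : nat) (s : 'I_n) (d : nat) (f : {mpoly F[n]}) : Prop :=
  f = 0 \/ ((msize f <= d.+1)%N /\ (degX s f < #|K s| - delta + 1)%N).

Definition asb (P : Prop) : bool :=
  if excluded_middle_informative P then true else false.

Definition qac_code (F : finFieldType) (n m : nat) (K : 'I_n -> {set F})
  (alpha : 'I_m -> ('I_n -> F)) (delta : nat) (s : 'I_n) (d : nat)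
  : {set 'rV[F]_m} :=
  [set v | asb (exists f, Pds K delta s d f /\ v = Psi alpha f)].

(* its F_q-dimension: the dimension of the (linear) span of its words
   (the code is already a linear subspace, so this is its dimension) *)
Definition code_dim (F : finFieldType) (m : nat) (C : {set 'rV[F]_m}) : nat :=
  \dim (<< enum C >>)%VS.

(* Main.v *)
Require Import Defs.
From HB Require Import structures.
From mathcomp Require Import all_boot all_order all_algebra all_field.
From mathcomp Require Import mpoly.
From mathcomp Require Import zify.
From Stdlib Require Import FunctionalExtensionality ClassicalEpsilon.
Set Implicit Arguments. Unset Strict Implicit. Unset Printing Implicit Defensive.
Import GRing.Theory.
Local Open Scope ring_scope.

Lemma hprod (F : fieldType) (s : seq F) t :
  (\prod_(b <- s) ('X - b%:P)).[t] = \prod_(b <- s) (t - b).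
Proof. by rewrite horner_prod; apply: eq_bigr => b _; rewrite hornerXsubC. Qed.

Lemma interp (F : finFieldType) (K : {set F}) (g : F -> F) :
  exists c : nat -> F, (forall k, c k != 0 -> (k < #|K|)%N) /\
    forall t, t \in K -> g t = \sum_(k < #|F|) c k * t ^+ k.
Proof.
pose P : {poly F} := \sum_(a in K)
   (g a / \prod_(b <- enum (K :\ a)) (a - b)) *: \prod_(b <- enum (K :\ a)) ('X - b%:P).
have szP : (size P <= #|K|)%N.
  apply: leq_trans (size_sum _ _ _) _.
  apply/bigmax_leqP => a aK.
  apply: leq_trans (size_scale_leq _ _) _.
  by rewrite size_prod_XsubC -cardE (cardsD1 a K) aK.
exists (fun k => P`_k); split.
  move=> k; apply: contraR; rewrite -leqNgt => hk.
  by rewrite nth_default // (leq_trans szP hk).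
move=> t tK.
rewrite -horner_coef_wide; last by apply: leq_trans szP (max_card _).
rewrite horner_sum (bigD1 t) //= [X in _ + X]big1 ?addr0.
  rewrite hornerZ hprod divfK //.
  rewrite prodf_seq_neq0; apply/allP => b /=; rewrite mem_enum !inE => /andP[hb _].
  by rewrite subr_eq0 eq_sym.
move=> a /andP[aK hat]; rewrite hornerZ hprod.
rewrite [X in _ * X](bigD1_seq t) /= ?subrr ?mul0r ?mulr0 //.
  by rewrite mem_enum !inE tK eq_sym hat.
exact: enum_uniq.
Qed.

Lemma interp_pow (F : finFieldType) (K : {set F}) (m : nat) :
  exists c : nat -> F, (forall k, c k != 0 -> (k < #|K|)%N && (k <= m)%N) /\
    forall t, t \in K -> t ^+ m = \sum_(k < #|F|) c k * t ^+ k.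
Proof.
have [lt|ge] := ltnP m #|K|.
  have ltF : (m < #|F|)%N by apply: leq_trans lt (max_card _).
  exists (fun k => (k == m)%:R); split.
    move=> k /=; case: (k =P m) => [->|_]; by rewrite ?lt ?leqnn ?eqxx.
  move=> t _; rewrite (bigD1 (Ordinal ltF)) //= eqxx mul1r big1 ?addr0 //.
  by move=> k hk; rewrite -(inj_eq val_inj) /= in hk; rewrite (negbTE hk) mul0r.
have [c [hc1 hc2]] := interp K (fun t => t ^+ m).
exists c; split => // k /hc1 hk; rewrite hk /=; apply: leq_trans (ltnW hk) ge.
Qed.

Definition EE (F : finFieldType) (n : nat) := {ffun 'I_n -> 'I_#|F|}.
Definition mono (F : finFieldType) n (f : EE F n) : 'X_{1..n} :=
  [multinom (f i : nat) | i < n].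
Definition vv (F : finFieldType) n m (alpha : 'I_m -> 'I_n -> F) (f : EE F n)
  : 'rV[F]_m := \row_j \prod_i (alpha j i) ^+ (f i).

Lemma distr (F : finFieldType) n m (K : 'I_n -> {set F})
  (alpha : 'I_m -> 'I_n -> F) (c : 'I_n -> nat -> F) (g : 'I_n -> F -> F) :
  (forall j i, alpha j i \in K i) ->
  (forall i t, t \in K i -> g i t = \sum_(k < #|F|) c i k * t ^+ k) ->
  \row_j \prod_i g i (alpha j i) =
    \sum_(f : EE F n) (\prod_i c i (f i)) *: vv alpha f.
Proof.
move=> hK hg; apply/rowP => j; rewrite mxE summxE.
rewrite (eq_bigr (fun i => \sum_(k < #|F|) c i k * (alpha j i) ^+ k)); last first.
  by move=> i _; rewrite hg.
rewrite bigA_distr_bigA; apply: eq_bigr => f _.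
by rewrite !mxE big_split.
Qed.

Lemma in_span (F : finFieldType) n m (alpha : 'I_m -> 'I_n -> F)
  (B : {set EE F n}) (a : EE F n -> F) :
  (forall f, a f != 0 -> f \in B) ->
  \sum_(f : EE F n) a f *: vv alpha f \in <<map (vv alpha) (enum B)>>%VS.
Proof.
move=> ha; rewrite (bigID (mem B)) /= [X in _ + X]big1 ?addr0; last first.
  move=> f fB; have /eqP -> : a f == 0 by apply: contraNT fB => /ha.
  by rewrite scale0r.
apply: memv_suml => f fB; apply: memvZ; apply: memv_span.
by apply: map_f; rewrite mem_enum.
Qed.

Lemma PsiX (F : finFieldType) n m (alpha : 'I_m -> 'I_n -> F) (f : EE F n) :
  Psi alpha 'X_[mono f] = vv alpha f.
Proof.
by apply/rowP => j; rewrite !mxE mevalX; apply: eq_bigr => i _; rewrite mnmE.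
Qed.

Lemma Psi_sum (F : finFieldType) n m (alpha : 'I_m -> 'I_n -> F) I (r : seq I)
  (a : I -> F) (p : I -> {mpoly F[n]}) :
  Psi alpha (\sum_(i <- r) a i *: p i) = \sum_(i <- r) a i *: Psi alpha (p i).
Proof.
elim: r => [|x r IH]; first by rewrite !big_nil; apply/rowP => j; rewrite !mxE meval0.
rewrite !big_cons -IH; apply/rowP => j; rewrite !mxE mevalD mevalZ.
by [].
Qed.

Lemma card_bnd (F : finFieldType) n (c : 'I_n -> nat) :
  (forall i, c i <= #|F|)%N ->
  #|[set f : EE F n | [forall i, (f i < c i)%N]]| = (\prod_i c i)%N.
Proof.
move=> hc.
have -> : [set f : EE F n | [forall i, (f i < c i)%N]] =
   [set f : EE F n | f \in family (fun i => [pred k : 'I_#|F| | (k < c i)%N])].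
  by apply/setP => f; rewrite !inE.
rewrite cardsE card_family foldrE big_map big_enum /=.
apply: eq_bigr => i _.
have -> : #|[pred k : 'I_#|F| | (k < c i)%N]| = #|[set widen_ord (hc i) k | k in 'I_(c i)]|.
  apply: eq_card => k; rewrite inE /=; apply/idP/imsetP.
    by move=> hk; exists (Ordinal hk) => //; apply: val_inj.
  by case=> k' _ ->; rewrite /= ltn_ord.
by rewrite card_imset ?card_ord //; by move=> x y /(congr1 val) /= /val_inj.
Qed.

Definition bnd (F : finFieldType) n (K : 'I_n -> {set F}) (delta : nat) (s i : 'I_n)
  : nat := if i == s then (#|K s| - delta + 1)%N else #|K i|.

Definition Bd (F : finFieldType) n (K : 'I_n -> {set F}) (delta : nat) (s : 'I_n)
  (d : nat) : {set EE F n} :=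
  [set f : EE F n | [forall i, (f i < bnd K delta s i)%N] &&
                    (\sum_i (f i : nat) <= d)%N].

Lemma Bd_mono (F : finFieldType) n (K : 'I_n -> {set F}) delta s d1 d2 :
  (d1 <= d2)%N -> Bd K delta s d1 \subset Bd K delta s d2.
Proof.
move=> le; apply/subsetP => f; rewrite !inE => /andP[-> h] /=.
exact: leq_trans h le.
Qed.

Lemma span_mono (F : finFieldType) n m (alpha : 'I_m -> 'I_n -> F)
  (B1 B2 : {set EE F n}) : B1 \subset B2 ->
  (<<map (vv alpha) (enum B1)>> <= <<map (vv alpha) (enum B2)>>)%VS.
Proof.
move=> sub; apply/span_subvP => v /mapP [f fB ->]; apply: memv_span.
by apply: map_f; rewrite mem_enum (subsetP sub) // -mem_enum.
Qed.

Lemma Pds_comb (F : finFieldType) n (K : 'I_n -> {set F}) delta s d (I : eqType)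
  (r : seq I) (h : I -> EE F n) (a : I -> F) :
  (forall i, i \in r -> h i \in Bd K delta s d) ->
  Pds K delta s d (\sum_(i <- r) a i *: 'X_[mono (h i)]).
Proof.
move=> hr; right.
set g := \sum_(i <- r) _.
have key : forall e, e \in msupp g ->
    (mdeg e <= d)%N /\ (e s < bnd K delta s s)%N.
  move=> e; rewrite mcoeff_msupp /g raddf_sum /=.
  under eq_bigr do rewrite mcoeffZ mcoeffX.
  case: (boolP (has (fun i => mono (h i) == e) r)) => [/hasP [i ir /eqP <-] | hn].
    have := hr i ir; rewrite inE => /andP [/forallP hb hs]; split.
      by rewrite mdegE; under eq_bigr do rewrite mnmE.
    by rewrite mnmE; exact: hb s.
  rewrite big1_seq ?eqxx // => i /andP[_ ir].
  have /negbTE -> : mono (h i) != e.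
    by apply: contra hn => he; apply/hasP; exists i.
  by rewrite mulr0.
split.
  rewrite msizeE; apply/bigmax_leqP_seq => e he _.
  by have [h1 _] := key e he.
rewrite /degX; apply: (@leq_ltn_trans (#|K s| - delta)); last by rewrite addn1.
apply/bigmax_leqP_seq => e he _; have [_ h2] := key e he.
by move: h2; rewrite /bnd eqxx addn1 ltnS.
Qed.

Lemma reduce_mono (F : finFieldType) n m (K : 'I_n -> {set F})
  (alpha : 'I_m -> 'I_n -> F) delta s (mo : 'X_{1..n}) :
  (forall j i, alpha j i \in K i) ->
  (mo s < bnd K delta s s)%N ->
  Psi alpha 'X_[mo] \in <<map (vv alpha) (enum (Bd K delta s (mdeg mo)))>>%VS.
Proof.
move=> hK hs.
have /fin_all_exists [c hc] : forall i, exists c : nat -> F,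
    (forall k, c k != 0 -> (k < #|K i|)%N && (k <= mo i)%N) /\
    forall t, t \in K i -> t ^+ mo i = \sum_(k < #|F|) c k * t ^+ k.
  by move=> i; apply: interp_pow.
have E := @distr F n m K alpha c (fun i (t : F) => t ^+ mo i) hK.
have -> : Psi alpha 'X_[mo] = \sum_(f : EE F n) (\prod_i c i (f i)) *: vv alpha f.
  rewrite -E; last by move=> i t tK; case: (hc i) => _ ->.
  by apply/rowP => j; rewrite !mxE mevalX.
apply: in_span => f /prodf_neq0 hf.
have hf' : forall i, (f i < #|K i|)%N && (f i <= mo i)%N.
  by move=> i; case: (hc i) => h _; apply: h; apply: hf.
rewrite inE; apply/andP; split.
  apply/forallP => i; case: (i =P s) => [-> | ne].
    by case/andP: (hf' s) => _ h; apply: leq_ltn_trans h hs.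
  by rewrite /bnd (introF eqP ne); case/andP: (hf' i).
rewrite mdegE; apply: leq_sum => i _.
by case/andP: (hf' i).
Qed.

Lemma asbP (P : Prop) : reflect P (asb P).
Proof. by rewrite /asb; case: excluded_middle_informative => h; constructor. Qed.

Lemma Psi_in_span (F : finFieldType) n m (K : 'I_n -> {set F})
  (alpha : 'I_m -> 'I_n -> F) delta s d (f : {mpoly F[n]}) :
  (forall j i, alpha j i \in K i) -> Pds K delta s d f ->
  Psi alpha f \in <<map (vv alpha) (enum (Bd K delta s d))>>%VS.
Proof.
move=> hK [->|[hsz hdeg]].
  have -> : Psi alpha 0 = 0 by apply/rowP => j; rewrite !mxE meval0.
  exact: mem0v.
rewrite (mpolyE f) Psi_sum big_seq; apply: memv_suml => mo hmo; apply: memvZ.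
have hmo' : (mo s < bnd K delta s s)%N.
  rewrite /bnd eqxx; apply: leq_ltn_trans hdeg.
  rewrite /degX; exact: (@leq_bigmax_seq _ (msupp f) xpredT (fun mo : 'X_{1..n} => mo s) mo hmo isT).
apply: (subvP (span_mono alpha (Bd_mono K delta s (_ : mdeg mo <= d)%N))).
  by have := msize_mdeg_lt hmo; move=> h; apply: leq_trans h hsz.
exact: reduce_mono.
Qed.

Lemma span_code (F : finFieldType) n m (K : 'I_n -> {set F})
  (alpha : 'I_m -> 'I_n -> F) delta s d :
  (forall j i, alpha j i \in K i) ->
  (<<enum (qac_code K alpha delta s d)>> =
     <<map (vv alpha) (enum (Bd K delta s d))>>)%VS.
Proof.
move=> hK; apply/subv_anti/andP; split.
  apply/span_subvP => v; rewrite mem_enum inE => /asbP [f [hf ->]].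
  exact: Psi_in_span.
apply/span_subvP => v /mapP [f fB ->]; apply: memv_span.
rewrite mem_enum inE; apply/asbP; exists 'X_[mono f]; split; last by rewrite PsiX.
have := @Pds_comb F n K delta s d _ [:: f] id (fun _ => 1).
rewrite big_seq1 scale1r; apply => i; rewrite inE => /eqP ->.
by rewrite -mem_enum.
Qed.

Lemma full_span (F : finFieldType) n m (K : 'I_n -> {set F})
  (alpha : 'I_m -> 'I_n -> F) :
  injective alpha -> (forall j i, alpha j i \in K i) ->
  (fullv <= <<map (vv alpha)
      (enum [set f : EE F n | [forall i, (f i < #|K i|)%N]])>>)%VS.
Proof.
move=> inj hK; apply/subvP => w _; rewrite (row_sum_delta w).
apply: memv_suml => j _; apply: memvZ.
have /fin_all_exists [c hc] : forall i, exists c : nat -> F,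
    (forall k, c k != 0 -> (k < #|K i|)%N) /\
    forall t, t \in K i -> (t == alpha j i)%:R = \sum_(k < #|F|) c k * t ^+ k.
  by move=> i; apply: interp.
have E := @distr F n m K alpha c (fun i (t : F) => (t == alpha j i)%:R) hK.
have -> : delta_mx 0 j = \sum_(f : EE F n) (\prod_i c i (f i)) *: vv alpha f.
  rewrite -E; last by move=> i t tK; case: (hc i) => _ ->.
  apply/rowP => j'; rewrite !mxE /=.
  case: (j' =P j) => [-> | ne].
    by rewrite big1 // => i _; rewrite eqxx.
  case: (pickP (fun i => alpha j' i != alpha j i)) => [i hi | h].
    by rewrite (bigD1 i) //= (negbTE hi) mul0r.
  exfalso; apply: ne; apply: inj; apply: functional_extensionality => i.
  by apply/eqP; have := h i; move/negbFE.
apply: in_span => f /prodf_neq0 hf; rewrite inE; apply/forallP => i.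
by case: (hc i) => h _; apply: h; apply: hf.
Qed.

Lemma free_sub (F : finFieldType) n m (K : 'I_n -> {set F})
  (alpha : 'I_m -> 'I_n -> F) (B : {set EE F n}) :
  injective alpha -> (forall j i, alpha j i \in K i) ->
  #|[set f : EE F n | [forall i, (f i < #|K i|)%N]]| = m ->
  B \subset [set f : EE F n | [forall i, (f i < #|K i|)%N]] ->
  free (map (vv alpha) (enum B)).
Proof.
set Bf := [set f : EE F n | _].
move=> inj hK hcard sub.
have fr : free (map (vv alpha) (enum Bf)).
  apply: (@basis_free _ _ fullv); rewrite basisEdim full_span //=.
  by rewrite size_map -cardE hcard dimvf /dim /= mul1n.
have hperm : perm_eq (enum Bf) (enum B ++ enum (Bf :\: B)).
  apply: uniq_perm; first exact: enum_uniq.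
    rewrite cat_uniq !enum_uniq andbT /=; apply/hasPn => x.
    by rewrite !mem_enum !inE => /andP[/negbTE ->].
  move=> x; rewrite mem_cat !mem_enum !inE.
  case xB: (x \in B) => //=; by have := subsetP sub x xB; rewrite inE.
move: fr; rewrite (perm_free (perm_map (vv alpha) hperm)) map_cat.
exact: catl_free.
Qed.

Theorem mainTheorem3 (F : finFieldType) (n : nat) (K : 'I_n -> {set F})
  (alpha : 'I_(\prod_(i < n) #|K i|) -> ('I_n -> F))
  (delta : nat) (s : 'I_n) :
  (forall i, K i != set0) ->
  injective alpha ->
  (forall x : 'I_n -> F, in_grid K x <-> exists j, alpha j = x) ->
  (2 <= delta)%N ->
  (delta <= #|K s|)%N ->
  let dt := (\sum_(i < n | i != s) (#|K i| - 1) + (#|K s| - delta))%N in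
  (forall d : nat, (dt <= d)%N ->
     qac_code K alpha delta s d = qac_code K alpha delta s dt)
  /\ code_dim (qac_code K alpha delta s dt)
       = ((#|K s| - delta + 1) * \prod_(i < n | i != s) #|K i|)%N
  /\ ((1 <= dt)%N ->
       code_dim (qac_code K alpha delta s dt.-1)
         = (code_dim (qac_code K alpha delta s dt)).-1).
Proof.
move=> hne inj hgrid h2 hds dt.
have hK : forall j i, alpha j i \in K i.
  by move=> j; apply: (proj2 (hgrid (alpha j))); exists j.
pose b := bnd K delta s.
have hKpos : forall i, (0 < #|K i|)%N by move=> i; rewrite card_gt0 hne.
have hbF : forall i, (b i <= #|F|)%N.
  move=> i; apply: (@leq_trans #|K i|); last exact: max_card.
  rewrite /b /bnd; case: eqP => [-> | _] //; lia.
have hb0 : forall i, (0 < b i)%N.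
  move=> i; rewrite /b /bnd; case: eqP => // _; by rewrite addn1.
have hdt : dt = (\sum_i (b i).-1)%N.
  rewrite /dt [RHS](bigD1 s) //= [RHS]addnC /b /bnd eqxx addn1 /=; congr (_ + _)%N.
  by apply: eq_bigr => i ne; rewrite (negbTE ne) subn1.
have hsum : forall f : EE F n, [forall i, (f i < b i)%N] ->
    (\sum_i (f i : nat) <= dt)%N.
  move=> f /forallP hf; rewrite hdt; apply: leq_sum => i _.
  by rewrite -ltnS prednK // hf.
have BdE : forall d, (dt <= d)%N -> Bd K delta s d = Bd K delta s dt.
  move=> d hd; apply/setP => f; rewrite !inE.
  case hf: [forall i, _] => //=.
  by rewrite (hsum f hf) (leq_trans (hsum f hf) hd).
have Bsub : forall d, Bd K delta s d \subset
    [set f : EE F n | [forall i, (f i < #|K i|)%N]].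
  move=> d; apply/subsetP => f; rewrite !inE => /andP[/forallP hf _].
  apply/forallP => i; apply: leq_trans (hf i) _.
  rewrite /bnd; case: eqP => [-> | _] //; lia.
have hcard : #|[set f : EE F n | [forall i, (f i < #|K i|)%N]]| =
    (\prod_(i < n) #|K i|)%N.
  by apply: card_bnd => i; apply: max_card.
have dimE : forall d, code_dim (qac_code K alpha delta s d) =
    #|Bd K delta s d|.
  move=> d; rewrite /code_dim span_code //.
  by rewrite (eqP (free_sub inj hK hcard (Bsub d))) size_map -cardE.
have cardBs : #|Bd K delta s dt| = (\prod_i b i)%N.
  rewrite -(@card_bnd F n b) //; apply: eq_card => f; rewrite !inE.
  by case hf: [forall i, _] => //=; rewrite hsum.
have F_pos : (0 < #|F|)%N by apply/card_gt0P; exists 0.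
pose f0 : EE F n := [ffun _ => Ordinal F_pos].
split.
  move=> d hd; apply/setP => x; rewrite !inE.
  apply/asbP/asbP => [[f [hf ->]] | [f [hf ->]]]; last first.
    exists f; split => //; case: hf => [-> | [h1 h3]]; [by left | right].
    by split => //; apply: leq_trans h1 _.
  have := Psi_in_span hK hf; rewrite BdE //.
  set X := map (vv alpha) (enum (Bd K delta s dt)) => hX.
  have E := @coord_span _ _ _ (in_tuple X) _ hX.
  exists (\sum_(i < size X) coord (in_tuple X) i (Psi alpha f) *:
           'X_[mono (nth f0 (enum (Bd K delta s dt)) i)]).
  split.
    apply: Pds_comb => i _; rewrite -mem_enum mem_nth //.
    by rewrite -(size_map (vv alpha)); exact: ltn_ord i.
  rewrite Psi_sum [LHS]E; apply: eq_bigr => i _; rewrite PsiX /=.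
  congr (_ *: _); rewrite /X (nth_map f0) //.
  by rewrite -(size_map (vv alpha)); exact: ltn_ord i.
split.
  rewrite dimE cardBs (bigD1 s) //= /b /bnd eqxx; congr (_ * _)%N.
  by apply: eq_bigr => i ne; rewrite (negbTE ne).
move=> hdt1; rewrite !dimE.
have htop : forall i, ((b i).-1 < #|F|)%N.
  by move=> i; apply: leq_trans (hbF i); rewrite ltn_predL.
pose top : EE F n := [ffun i => Ordinal (htop i)].
have topsum : (\sum_i (top i : nat))%N = dt.
  by rewrite hdt; apply: eq_bigr => i _; rewrite ffunE.
have topB : top \in Bd K delta s dt.
  rewrite inE topsum leqnn andbT; apply/forallP => i.
  by rewrite ffunE /= ltn_predL.
rewrite [X in _ = X.-1](cardsD1 top) topB add1n /=; apply: eq_card => f; rewrite !inE.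

case hf: [forall i, _] => /=; last by rewrite andbF.
rewrite (hsum f hf) andbT; move/forallP: hf => hf.
symmetry; apply/idP/idP.
  move=> ne.
  have [i hi] : exists i, f i != top i.
    case: (pickP (fun i => f i != top i)) => [i hi | h]; first by exists i.
    by case/eqP: ne; apply/ffunP => i; apply/eqP; have := h i; move/negbFE.
  have hlt : (f i < (b i).-1)%N.
    have h1 := hf i; have h0 := hb0 i.
    have h3 : (f i : nat) != (b i).-1 by move: hi; rewrite -(inj_eq val_inj) ffunE.
    move/eqP: h3 => h3; rewrite /b in h0 h3 *; move: h0 h1 h3; case: (bnd K delta s i) => // k _ /= h1 h3; lia.
  rewrite hdt (bigD1 i) //= [X in (_ <= X.-1)%N](bigD1 i) //=.
  have : (\sum_(k < n | k != i) (f k : nat) <= \sum_(k < n | k != i) (b k).-1)%N.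
    by apply: leq_sum => k _; rewrite -ltnS prednK // hf.
  move: hlt.
  set S1 := \sum_(k < n | k != i) (f k : nat).
  set S2 := \sum_(k < n | k != i) (b k).-1.
  set x := (b i).-1.
  clearbody S1 S2 x => g1 g2; have h := leq_add g1 g2; rewrite addSn in h.
  by rewrite -ltnS (ltn_predK h).
move=> hle; apply/eqP => ftop; move: hle; rewrite ftop topsum -subn1; lia.
Qed.
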